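(* Let $(Q,\rightarrow)$ be a finite transition system, $\mathscr{R}$ a preorder on $Q$ and $\mathscr{P}\subseteq\mathscr{R}$ an equivalence relation with a representative $E.\mathrm{rep}\in E$ fixed for each block $E$ of $\mathscr{P}$. Let $E$ be a block of $\mathscr{P}$ and $B$ a block of $\mathscr{R}$ such that $E\rightarrow B$ and $\mathrm{RelCount}_{(\mathscr{P},\mathscr{R})}(E,B)=0$ (a splitter transition of type 1). Let $P'=\mathrm{Split}(P_{\mathscr{P}},\rightarrow^{-1}(\mathscr{R}(B)))$. Then the equivalence relation $\mathscr{P}_{P'}$ is strictly included in $\mathscr{P}$ and contains every $\mathscr{R}$-block-stable equivalence relation included in $\mathscr{P}$.
   Context: A preorder is a reflexive transitive relation; its blocks are $[q]_{\mathscr{R}}=\{q'\mid q\,\mathscr{R}\,q'\wedge q'\,\mathscr{R}\,q\}$. $\mathscr{R}(X)=\{q'\mid\exists q\in X.\ q\,\mathscr{R}\,q'\}$, $\rightarrow^{-1}(Y)=\{q\mid\exists y\in Y.\ q\rightarrow y\}$. For sets $X,Y$ write $X\rightarrow Y$ if some $x\in X,y\in Y$ have $x\rightarrow y$, and $X\,\mathscr{R}\,Y$ if $(X\times Y)\cap\mathscr{R}\ne\emptyset$. $P_{\mathscr{P}}$ is the partition of $Q$ into blocks of $\mathscr{P}$, and $\mathscr{P}_P=\bigcup_{E\in P}E\times E$ for a partition $P$. $\mathrm{RelCount}_{(\mathscr{P},\mathscr{R})}(E,B)=|\{E'\in P_{\mathscr{P}}\mid E.\mathrm{rep}\rightarrow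 E'\wedge B\,\mathscr{R}\,E'\}|$. $\mathrm{Split}(P,M)$ is the partition obtained from $P$ by replacing each block $E$ with $E\cap M\neq\emptyset$ and $E\not\subseteq M$ by the two blocks $E\cap M$ and $E\setminus M$. An equivalence relation $\mathscr{P}''\subseteq\mathscr{R}$ is $\mathscr{R}$-block-stable if for all $b,d,d'$ with $d\,\mathscr{P}''\,d'$: $d\in\rightarrow^{-1}(\mathscr{R}(b))\iff d'\in\rightarrow^{-1}(\mathscr{R}(b))$. *)

(* Defs.v *)
From mathcomp Require Import all_boot.
Set Implicit Arguments. Unset Strict Implicit. Unset Printing Implicit Defensive.

Section Defs.
Variable Q : finType.

Definition preorder (R : rel Q) : Prop := reflexive R /\ transitive R.
Definition is_equiv (P : rel Q) : Prop := [/\ reflexive P, symmetric P & transitive P].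
Definition subrel_of (P R : rel Q) : Prop := forall x y, P x y -> R x y.

Definition blk (R : rel Q) (q : Q) : {set Q} := [set q' | R q q' && R q' q].
Definition blocks (R : rel Q) : {set {set Q}} := [set blk R q | q : Q].
Definition img_rel (R : rel Q) (X : {set Q}) : {set Q} := [set q' | [exists q in X, R q q']].
Definition pre_tr (tr : rel Q) (Y : {set Q}) : {set Q} := [set q | [exists y in Y, tr q y]].
Definition set_trans (tr : rel Q) (X Y : {set Q}) : bool :=
  [exists x in X, exists y in Y, tr x y].
Definition set_rel (R : rel Q) (X Y : {set Q}) : bool :=
  [exists x in X, exists y in Y, R x y].
Definition rel_of_partition (Pt : {set {set Q}}) : rel Q :=
  fun x y => [exists E in Pt, (x \in E) && (y \in E)].

Definition RelCount (tr P R : rel Q) (rep : {set Q} -> Q) (E B : {set Q}) : nat :=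
  #|[set E' in blocks P | set_trans tr [set rep E] E' && set_rel R B E']|.

Definition splits (M E : {set Q}) : bool := (E :&: M != set0) && ~~ (E \subset M).
Definition SplitP (Pt : {set {set Q}}) (M : {set Q}) : {set {set Q}} :=
  [set E in Pt | ~~ splits M E]
  :|: [set E :&: M | E in Pt & splits M E]
  :|: [set E :\: M | E in Pt & splits M E].

Definition block_stable (tr R P2 : rel Q) : Prop :=
  is_equiv P2 /\ subrel_of P2 R /\
  forall b d d', P2 d d' ->
    (d \in pre_tr tr (img_rel R [set b])) = (d' \in pre_tr tr (img_rel R [set b])).
End Defs.

(* Main.v *)
Require Import Defs.
From mathcomp Require Import all_boot.

Theorem lemma3 (Q : finType) (tr R P : rel Q) (rep : {set Q} -> Q)
  (HR : preorder R) (HP : is_equiv P) (HPR : subrel_of P R)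
  (Hrep : forall E, E \in blocks P -> rep E \in E)
  (E B : {set Q}) (HE : E \in blocks P) (HB : B \in blocks R)
  (HEB : set_trans tr E B) (Hcount : RelCount tr P R rep E B = 0) :
  let P' := SplitP (blocks P) (pre_tr tr (img_rel R B)) in
  (subrel_of (rel_of_partition P') P /\
   exists x y, P x y /\ ~~ rel_of_partition P' x y) /\
  (forall P2 : rel Q, block_stable tr R P2 -> subrel_of P2 P ->
     subrel_of P2 (rel_of_partition P')).
Proof.
move=> P'.
case: HR => Rrefl Rtrans; case: HP => Prefl Psym Ptrans.
set M := pre_tr tr (img_rel R B).
have inblk : forall q x y, x \in blk P q -> y \in blk P q -> P x y.
  move=> q x y; rewrite !inE => /andP[h1 h2] /andP[h3 h4]; exact: (Ptrans _ _ _ h2 h3).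
have sub1 : forall E', E' \in P' -> exists q, E' \subset blk P q.
  move=> E'; rewrite !inE => /orP[/orP[|]|].
  - case/andP=> /imsetP[q _ ->] _; exists q; exact: subxx.
  - case/imsetP=> F; rewrite inE => /andP[/imsetP[q _ ->] _] ->.
    by exists q; apply: subsetIl.
  - case/imsetP=> F; rewrite inE => /andP[/imsetP[q _ ->] _] ->.
    by exists q; apply: subsetDl.
split; [split|].
- move=> x y /existsP[E' /andP[HE' /andP[hx hy]]].
  have [q /subsetP Hs] := sub1 E' HE'.
  exact: (inblk q x y (Hs _ hx) (Hs _ hy)).
- have HE0 := HE.
  case/imsetP: HE0 => e _ HEe.
  case/existsP: HEB => x /andP[xE /existsP[y /andP[yB txy]]].
  have xM : x \in M.
    rewrite inE; apply/existsP; exists y; rewrite txy andbT inE.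
    by apply/existsP; exists y; rewrite yB Rrefl.
  have rE := Hrep E HE.
  have rM : rep E \notin M.
    apply/negP; rewrite inE => /existsP[y' /andP[y'R try']].
    have : blk P y' \in [set E' in blocks P | set_trans tr [set rep E] E' && set_rel R B E'].
      rewrite inE; apply/and3P; split.
      + by apply/imsetP; exists y'.
      + apply/existsP; exists (rep E); rewrite set11 /=; apply/existsP; exists y'.
        by rewrite !inE !Prefl try'.
      + move: y'R; rewrite inE => /existsP[b /andP[bB Rby']].
        apply/existsP; exists b; rewrite bB /=; apply/existsP; exists y'.
        by rewrite !inE !Prefl Rby'.
    by rewrite (cards0_eq Hcount) inE.
  exists x, (rep E); split.
    by apply: (inblk e); rewrite -HEe.
  apply/existsP => -[E' /andP[HE' /andP[hx hr]]].
  move: HE'; rewrite !inE => /orP[/orP[|]|].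
  + case/andP=> _ /negP; apply; apply/andP; split.
      by apply/set0Pn; exists x; rewrite inE hx xM.
    by apply/subsetPn; exists (rep E).
  + case/imsetP=> F _ HF; move: hr; rewrite HF inE => /andP[_ h].
    by rewrite h in rM.
  + case/imsetP=> F _ HF; move: hx; rewrite HF inE => /andP[h _].
    by rewrite xM in h.
- move=> P2 [[P2r P2s P2t] [P2R Hst]] P2P x y P2xy.
  case/imsetP: HB => b0 _ HBb.
  have Mimg : img_rel R B = img_rel R [set b0].
    apply/setP => q; rewrite !inE; apply/existsP/existsP => -[q0 /andP[h1 h2]].
      exists b0; rewrite set11 /=; move: h1; rewrite HBb inE => /andP[h3 _].
      exact: (Rtrans _ _ _ h3 h2).
    move/set1P: h1 => h1; subst q0.
    by exists b0; rewrite HBb inE Rrefl h2.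
  have xyM : (x \in M) = (y \in M) by rewrite /M Mimg; exact: Hst.
  have Pxy := P2P x y P2xy.
  have xb : x \in blk P x by rewrite inE Prefl.
  have yb : y \in blk P x by rewrite inE Pxy Psym.
  have bP : blk P x \in blocks P by apply/imsetP; exists x.
  apply/existsP; case: (boolP (splits M (blk P x))) => hs.
  + case: (boolP (x \in M)) => hx.
    * exists (blk P x :&: M); apply/andP; split; last first.
        by rewrite !in_setI xb yb hx -xyM hx.
      rewrite /P' /SplitP; apply/setUP; left; apply/setUP; right.
      by apply/imsetP; exists (blk P x) => //; rewrite inE bP hs.
    * exists (blk P x :\: M); apply/andP; split; last first.
        by rewrite !in_setD xb yb hx -xyM hx.
      rewrite /P' /SplitP; apply/setUP; right.
      by apply/imsetP; exists (blk P x) => //; rewrite inE bP hs.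
  + exists (blk P x); rewrite xb yb andbT.
    rewrite andbT /P' /SplitP; apply/setUP; left; apply/setUP; left.
    by rewrite inE bP hs.
Qed.
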